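(* Let $p$ be a prime. Let $M$ be a matroid over $\mathbb{Z}/p\mathbb{Z}$ and $N$ a sparse paving matroid over $\mathbb{Z}/p\mathbb{Z}$, both of the same rank $n$, such that either (1) $E(M)$ is not a progression and $|E(M)|=|E(N)|-1$, or (2) $E(M)$ is neither a progression nor a semi-progression and $|E(M)|=|E(N)|$. If $0\notin E(N)$, then $M$ is matched to $N$.
   Context: A matroid over an abelian group $G$ is a matroid $M$ whose finite ground set $E(M)$ is a subset of $G$; all matroids are assumed loopless. A matroid of rank $n$ is paving if every $(n-1)$-element subset of its ground set is independent; it is sparse paving if both it and its dual matroid are paving. A progression of length $k$ with difference $x$ and initial term $a$ is a set $\{a,a+x,\dots,a+(k-1)x\}$; a set $A$ is a semi-progression if $A\setminus\{a\}$ is a progression for some $a\in A$. For matroids $M,N$ over $G$ with $r(M)=r(N)=n>0$ and bases $\mathcal{M}=\{a_1,\dots,a_n\}$ of $M$ and $\mathcal{N}=\{b_1,\dots,b_n\}$ of $N$, $\mathcal{M}$ is matched to $\mathcal{N}$ if there is a permutation $\pi\in S_n$ with $a_i+b_{\pi(i)}\notin E(M)$ for all $i$. $M$ is matched to $N$ if for every basis $\mathcal{M}$ of $M$ there exists a basis $\mathcal{N}$ of $N$ such that $\mathcal{M}$ is matched to $\mathcal{N}$. *)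

(* Defs.v *)
From HB Require Import structures.
From mathcomp Require Import all_boot all_order all_algebra.
Set Implicit Arguments. Unset Strict Implicit. Unset Printing Implicit Defensive.
Import GRing.Theory.
Local Open Scope ring_scope.

Section Matroids.
Variable T : finType.

Definition is_matroid (E : {set T}) (B : {set {set T}}) : Prop :=
  [/\ B != set0,
      (forall X : {set T}, X \in B -> X \subset E) &
      (forall B1 B2, B1 \in B -> B2 \in B -> forall x, x \in B1 :\: B2 ->
         exists2 y, y \in B2 :\: B1 & y |: (B1 :\ x) \in B)].

Definition indep (B : {set {set T}}) (X : {set T}) : bool :=
  [exists Y in B, X \subset Y].

Definition loopless (E : {set T}) (B : {set {set T}}) : Prop :=
  forall x, x \in E -> indep B [set x].

Definition has_rank (B : {set {set T}}) (n : nat) : Prop :=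
  forall X : {set T}, X \in B -> (#|X| = n)%N.

Definition dual_bases (E : {set T}) (B : {set {set T}}) : {set {set T}} :=
  [set E :\: X | X in B].

Definition paving (E : {set T}) (B : {set {set T}}) (n : nat) : Prop :=
  forall X : {set T}, X \subset E -> (#|X| = n.-1)%N -> indep B X.

Definition sparse_paving (E : {set T}) (B : {set {set T}}) (n : nat) : Prop :=
  paving E B n /\ paving E (dual_bases E B) (#|E| - n)%N.

End Matroids.


Section Additive.
Variable T : finZmodType.

Definition progression (A : {set T}) : Prop :=
  exists (a x : T) (k : nat), A = [set a + x *+ (nat_of_ord i) | i : 'I_k].

Definition semi_progression (A : {set T}) : Prop :=
  exists2 a, a \in A & progression (A :\ a).

Definition matched_bases (EM : {set T}) (A C : {set T}) : Prop :=
  exists f : T -> T, [/\ {in A &, injective f}, f @: A = C &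
                         forall a, a \in A -> a + f a \notin EM].

Definition matched (EM : {set T}) (BM : {set {set T}})
                   (EN : {set T}) (BN : {set {set T}}) : Prop :=
  forall A, A \in BM -> exists2 C, C \in BN & matched_bases EM A C.

End Additive.

(* Main.v *)
Require Import Defs.
From mathcomp Require Import all_boot all_order all_algebra.
From mathcomp Require Import zify ring.
Set Implicit Arguments. Unset Strict Implicit. Unset Printing Implicit Defensive.
Import GRing.Theory.

Lemma ar_a (a b k : nat) : a <= k.+2 -> a + b - 1 <= b + k.+1. Proof. lia. Qed.
Lemma ar_b (u i a b : nat) : u + i = a + a -> u <= a + b - 1 -> 1 < b -> a + 1 <= i + b. Proof. lia. Qed.
Lemma ar_c (a i b k : nat) : a + 1 <= i + b -> i <= k -> b <= a -> 0 < k. Proof. lia. Qed.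
Lemma ar_d (a b k i s : nat) : a + 1 <= i + b -> i <= k -> b + k - 1 <= s -> s <= a -> 1 < b -> k + b = a + 1. Proof. lia. Qed.
Lemma ar_e (a b k i s : nat) : a + 1 <= i + b -> i <= k -> b + k - 1 <= s -> 1 < b -> a <= s. Proof. lia. Qed.
Lemma ar_f (k b a : nat) : k + b = a + 1 -> 1 < b -> k < a. Proof. lia. Qed.
Lemma ar_g (k b a : nat) : k + b = a + 1 -> a <= k + b - 1. Proof. lia. Qed.
Lemma ar_h (k b a : nat) : k + b = a + 1 -> b <= a -> 1 <= k. Proof. lia. Qed.
Lemma ar_i (k b a : nat) : k + b = a + 1 -> k = 1 -> a = b. Proof. lia. Qed.
Lemma ar_j (u i a b : nat) : u + i = a + a -> i <= 1 -> a = b -> a + b - 1 <= u. Proof. lia. Qed.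
Lemma ar_k (b i j : nat) : b <= i + j -> i <= 1 -> j <= 1 -> 2 < b -> False. Proof. lia. Qed.
Lemma ar_l (ns s s' u i n' d : nat) : ns <= s -> s + s' - 0 <= u -> i + d = n' -> u + i = ns + n' -> s' <= d. Proof. lia. Qed.
Lemma ar_m (s n c d : nat) : s < n -> n = c + d -> c <= 1 -> s <= d. Proof. lia. Qed.
Lemma ar_p (s x em en nb : nat) : en + 1 <= nb + x -> s + x - 1 <= em -> em <= en -> 1 <= x -> s <= nb. Proof. lia. Qed.
Lemma ar_q (en em nb n x : nat) : en = em + 1 -> en + 1 <= nb + x -> nb <= n -> n + x - 1 <= em -> 1 <= x -> False. Proof. lia. Qed.
Lemma ar_r (en em nb n x : nat) : en = em -> en + 1 <= nb + x -> nb <= n -> x <= 1 -> n <= em -> n = en. Proof. lia. Qed.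
Lemma ar_n (en em nb n x : nat) : en = em -> en + 1 <= nb + x -> nb <= n -> em <= n + x - 1. Proof. lia. Qed.
Lemma ar_o (em p : nat) : em < p -> em <> p.-1 -> em + 2 <= p. Proof. lia. Qed.
Lemma ar_s (i x d : nat) : i + d = x -> i <= x - 1 -> 1 <= x -> True. Proof. by []. Qed.
Lemma ar_t (en i d x nb : nat) : i + nb = en -> i <= x - 1 -> 1 <= x -> en + 1 <= nb + x. Proof. lia. Qed.
Lemma ar_u (k p : nat) : k < p -> k <> p.-1 -> k < p.-1. Proof. lia. Qed.


Local Open Scope ring_scope.

Section Basics.
Variable p : nat.
Hypothesis Hp : prime p.
Local Notation G := 'Z_p.

Lemma p_gt1 : (1 < p)%N. Proof. exact: prime_gt1. Qed.

Lemma cardG : #|G| = p.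
Proof. by rewrite card_ord Zp_cast // p_gt1. Qed.

Lemma ltG (x : G) : (x < p)%N.
Proof. rewrite -[p in (_ < p)%N](Zp_cast p_gt1); exact: ltn_ord. Qed.

Lemma unitG (x : G) : x != 0 -> x \is a GRing.unit.
Proof.
move=> nx; rewrite -(natr_Zp x) unitZpE ?p_gt1 // prime_coprime //.
have m0 : (0 < x)%N.
  by rewrite lt0n; apply: contra nx => /eqP h; apply/eqP/val_inj.
apply/negP => /(dvdn_leq m0) h; have := ltG x; by rewrite ltnNge h.
Qed.

Lemma mulrn_inj (x : G) (i j : nat) : x != 0 -> (i < p)%N -> (j < p)%N ->
  x *+ i = x *+ j -> i = j.
Proof.
move=> nx hi hj; rewrite -[x *+ i]mulr_natr -[x *+ j]mulr_natr => /(mulrI (unitG nx)) /(congr1 (@nat_of_ord _)).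
by rewrite !val_Zp_nat ?p_gt1 // !modn_small.
Qed.

Lemma mulrn_surj (x y : G) : x != 0 -> exists2 k, (k < p)%N & x *+ k = y.
Proof.
move=> nx; exists (val (x^-1 * y)).
  exact: ltG.
by rewrite -[x *+ _]mulr_natr natr_Zp mulrA divrr ?unitG // mul1r.
Qed.


Implicit Types (A B X : {set G}).

Definition shift (A : {set G}) (e : G) : {set G} := [set a + e | a in A].
Definition sumset (A B : {set G}) : {set G} := [set a + b | a in A, b in B].

Lemma mem_shift A e x : (x \in shift A e) = (x - e \in A).
Proof.
apply/imsetP/idP => [[a aA ->]|h]; first by rewrite addrK.
by exists (x - e) => //; rewrite subrK.
Qed.

Lemma card_shift A e : #|shift A e| = #|A|.
Proof. by apply: card_imset; apply: addIr. Qed.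

Lemma mem_sumset A B a b : a \in A -> b \in B -> a + b \in sumset A B.
Proof. by move=> aA bB; apply/imset2P; exists a b. Qed.

Lemma sumsetP A B x : reflect (exists a b, [/\ a \in A, b \in B & x = a + b])
  (x \in sumset A B).
Proof.
apply: (iffP imset2P) => [[a b aA bB ->]|[a [b [aA bB ->]]]]; first by exists a, b.
by exists a b.
Qed.

Lemma sumset1 A b : sumset A [set b] = shift A b.
Proof.
apply/setP => x; apply/sumsetP/idP => [[a [c [aA /set1P -> ->]]]|].
  by rewrite mem_shift addrK.
by rewrite mem_shift => h; exists (x - b), b; rewrite set11 subrK.
Qed.

Lemma sumsetC A B : sumset A B = sumset B A.
Proof.
by apply/setP => x; apply/sumsetP/sumsetP => -[a [b [aA bB ->]]]; exists b, a; rewrite addrC.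
Qed.

Lemma sumsetS A A' B B' : A \subset A' -> B \subset B' -> sumset A B \subset sumset A' B'.
Proof.
move=> /subsetP sA /subsetP sB; apply/subsetP => x /sumsetP [a [b [aA bB ->]]].
by apply: mem_sumset; [apply: sA | apply: sB].
Qed.

Lemma shift_iter X x y k : shift X x \subset X -> y \in X -> y + x *+ k \in X.
Proof.
move=> /subsetP sX yX; elim: k => [|k IH]; first by rewrite mulr0n addr0.
by rewrite mulrSr addrA; apply: sX; rewrite mem_shift addrK.
Qed.

Lemma orbit_full X x : x != 0 -> shift X x \subset X -> X != set0 -> X = setT.
Proof.
move=> nx sX /set0Pn [y yX]; apply/setP => z; rewrite inE.
have [k _ hk] := mulrn_surj (z - y) nx.
by have := shift_iter k sX yX; rewrite hk addrC subrK.
Qed.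


Lemma card_sumset_shift A B b : b \in B -> (#|A| <= #|sumset A B|)%N.
Proof.
move=> bB; rewrite -(card_shift A b) -sumset1; apply: subset_leq_card.
by apply: sumsetS => //; rewrite sub1set.
Qed.

Lemma shiftI_eq A B e : shift (B :&: shift A (- e)) e = A :&: shift B e.
Proof.
apply/setP => x; rewrite !inE !mem_shift inE mem_shift opprK subrK andbC //.
Qed.

Lemma etrans_sub A B e :
  sumset (A :|: shift B e) (B :&: shift A (- e)) \subset sumset A B.
Proof.
apply/subsetP => z /sumsetP [x [y [/setUP hx /setIP [yB]]]].
rewrite mem_shift opprK => ye ->.
case: hx => [xA|]; first exact: mem_sumset.
rewrite mem_shift => xe.
by rewrite (_ : x + y = (y + e) + (x - e)); [apply: mem_sumset | rewrite -addrA (addrC e) subrK addrC].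
Qed.

Lemma etrans_card A B e :
  (#|A :|: shift B e| + #|B :&: shift A (- e)| = #|A| + #|B|)%N.
Proof.
rewrite -(card_shift (B :&: shift A (- e)) e) shiftI_eq.
by rewrite -(card_shift B e) cardsUI.
Qed.

Lemma exists_etrans A B : A != setT -> (1 < #|B|)%N -> A != set0 ->
  exists a, exists2 c, a \in A /\ c \in B & ~~ (shift B (a - c) \subset A).
Proof.
move=> AnT B2 nA.
case: (boolP [exists a in A, exists c in B, ~~ (shift B (a - c) \subset A)]).
  by move=> /existsP [a /andP [aA /existsP [c /andP [cB h]]]]; exists a, c.
move=> /existsPn H; exfalso.
have [c1 [c2 [c1B c2B n12]]] : exists c1 c2, [/\ c1 \in B, c2 \in B & c1 != c2].
  have [c1 c1B] : exists c1, c1 \in B.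
    by apply/set0Pn; rewrite -card_gt0; apply: ltn_trans B2.
  have : (0 < #|B :\ c1|)%N by move: B2; rewrite (cardsD1 c1) c1B.
  rewrite card_gt0 => /set0Pn [c2]; rewrite !inE => /andP [n21 c2B].
  by exists c1, c2; split => //; rewrite eq_sym.
apply: (negP AnT); apply/eqP; apply: (@orbit_full A (c2 - c1)).
- by rewrite subr_eq0 eq_sym.
- apply/subsetP => y; rewrite mem_shift => yA.
  have := H (y - (c2 - c1)); rewrite yA /= negb_exists => /forallP /(_ c1).
  rewrite c1B /= negbK => /subsetP; apply; rewrite mem_shift.
  by rewrite (_ : y - _ = c2) //; ring.
- exact: nA.
Qed.



Lemma CD_aux m : forall A B, (#|B| <= m)%N -> A != set0 -> B != set0 ->
  (minn p (#|A| + #|B| - 1) <= #|sumset A B|)%N.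
Proof.
elim: m => [|m IH] A B hB nA nB.
  by move: nB; rewrite -card_gt0; case: #|B| hB.
have [b bB] : exists b, b \in B by apply/set0Pn.
have [B1|B2] := leqP #|B| 1.
  have hb : #|B| = 1%N by apply/eqP; rewrite eqn_leq B1 card_gt0.
  rewrite hb addnK; apply: leq_trans (geq_minr _ _) _; exact: card_sumset_shift bB.
have [AT|AnT] := eqVneq A setT.
  apply: leq_trans (geq_minl _ _) _.
  suff -> : sumset A B = setT by rewrite cardsT cardG.
  apply/eqP; rewrite eqEsubset subsetT /=; apply/subsetP => x _.
  by rewrite -(subrK b x); apply: mem_sumset; rewrite ?AT ?inE.
have [a [c [aA cB] nsub]] := exists_etrans AnT B2 nA.
set e := a - c.
have cB' : c \in B :&: shift A (- e) by rewrite inE cB mem_shift opprK /e addrC subrK.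
have [d dB dA] : exists2 d, d \in B & d + e \notin A.
  move/subsetPn: nsub => [x]; rewrite mem_shift => h1 h2; exists (x - e) => //.
  by rewrite subrK.
have ltB : (#|B :&: shift A (- e)| < #|B|)%N.
  apply: proper_card; apply/properP; split; first exact: subsetIl.
  by exists d => //; rewrite inE dB mem_shift opprK (negbTE dA).
have := IH (A :|: shift B e) (B :&: shift A (- e)).
rewrite etrans_card => H.
apply: leq_trans (H _ _ _) (subset_leq_card (etrans_sub A B e)).
- by rewrite -ltnS; apply: leq_trans ltB hB.
- by apply/set0Pn; exists a; rewrite inE aA.
- by apply/set0Pn; exists c.
Qed.

Lemma CD A B : A != set0 -> B != set0 ->
  (minn p (#|A| + #|B| - 1) <= #|sumset A B|)%N.
Proof. exact: CD_aux. Qed.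

Lemma CD' A B : A != set0 -> B != set0 -> (#|sumset A B| < p)%N ->
  (#|A| + #|B| - 1 <= #|sumset A B|)%N.
Proof.
move=> nA nB lt; have := CD nA nB; rewrite /minn; case: ifP => // _ h.
by move: (leq_ltn_trans h lt); rewrite ltnn.
Qed.


Lemma card_ltp (Y : {set G}) : Y != setT -> (#|Y| < p)%N.
Proof.
move=> nT; rewrite -[p in (_ < p)%N]cardG -cardsT; apply: proper_card.
by rewrite properT.
Qed.

Lemma card_lep (Y : {set G}) : (#|Y| <= p)%N.
Proof. by rewrite -[p in (_ <= p)%N]cardG; apply: max_card. Qed.

Lemma card_ltp_neq (Y : {set G}) : (#|Y| < p)%N -> Y != setT.
Proof. by apply: contraTneq => ->; rewrite cardsT cardG ltnn. Qed.

Lemma card_union_le X x s : s \notin X -> s \in X :|: shift X x ->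
  (#|X :|: shift X x| <= #|X|.+1)%N -> X :|: shift X x = s |: X.
Proof.
move=> sX sU hc; apply/eqP; rewrite eq_sym eqEcard; apply/andP; split.
  by apply/subsetP => z /setU1P [->|zX] //; rewrite inE zX.
by rewrite cardsU1 sX.
Qed.

Lemma L1 X x : X != set0 -> x != 0 ->
  (#|X :|: shift X x| <= #|X|.+1)%N -> X :|: shift X x != setT ->
  progression (X :|: shift X x).
Proof.
move=> nX nx hc nT.
have [s sS sX] : exists2 s, s \in shift X x & s \notin X.
  apply/subsetPn; apply: contra nT => sub.
  by rewrite (orbit_full nx sub nX) setTU.
have sU : s \in X :|: shift X x by rewrite inE sS orbT.
have hU := card_union_le sX sU hc.
have clos z : z \in X -> z + x != s -> z + x \in X.
  move=> zX nzs; have : z + x \in X :|: shift X x by rewrite inE mem_shift addrK zX orbT.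
  by rewrite hU => /setU1P [/eqP h|//]; rewrite h in nzs.
set m := #|X|.
have ltUp : (m < p)%N.
  by have := card_ltp nT; rewrite hU cardsU1 sX => /ltnW.
set q := s - x *+ m.
rewrite /progression; exists q, x, m.+1.
apply/eqP; rewrite eqEcard; apply/andP; split; last first.
  apply: leq_trans (leq_imset_card _ _) _.
  by rewrite card_ord hU cardsU1 sX.
rewrite hU; apply/subsetP => y /setU1P [->|yX].
  by apply/imsetP; exists ord_max => //=; rewrite /q subrK.
have [k1 k1p hk1] := mulrn_surj (s - y) nx.
have Pk1 : (0 < k1)%N && (y + x *+ k1 == s).
  rewrite hk1 addrC subrK eqxx andbT lt0n.
  apply/eqP => k00; move: hk1; rewrite k00 mulr0n => /eqP; rewrite eq_sym subr_eq0.
  by move/eqP => sy; rewrite sy yX in sX.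
have hk : exists k, (0 < k)%N && (y + x *+ k == s) by exists k1.
have [k /andP [k0 /eqP ks] kmin] := ex_minnP hk.
have inX i : (i < k)%N -> y + x *+ i \in X.
  elim: i => [|i IHi] hi; first by rewrite addr0.
  rewrite mulrSr addrA; apply: clos; first by apply: IHi; apply: ltnW.
  rewrite -addrA -mulrSr; apply/eqP => h.
  by have := kmin i.+1; rewrite h eqxx /= => /(_ isT); rewrite leqNgt hi.
have kp : (k < p)%N.
  exact: leq_ltn_trans (kmin _ Pk1) k1p.
have km : (k <= m)%N.
  have -> : k = #|[set y + x *+ (nat_of_ord i) | i : 'I_k]|.
    rewrite card_imset ?card_ord // => i j /addrI /mulrn_inj h.
    apply: val_inj; apply: h => //; apply: ltn_trans kp; exact: ltn_ord.
  apply: subset_leq_card; apply/subsetP => z /imsetP [i _ ->]; exact: inX.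
apply/imsetP; exists (Ordinal (leq_ltn_trans (leq_subr k m) (ltnSn m))) => //=.
have e : x *+ m = x *+ (m - k) + x *+ k by rewrite -mulrnDr subnK.
rewrite /q -ks e; ring.
Qed.


Lemma prog_shift Y a : progression Y -> progression (shift Y a).
Proof.
move=> [q [x [k ->]]]; exists (q + a), x, k.
apply/setP => z; rewrite mem_shift; apply/imsetP/imsetP => -[i _ h]; exists i => //.
  by rewrite -(subrK a z) h; ring.
by rewrite h; ring.
Qed.

Definition itr B x j := iter j (fun Y => Y :|: shift Y x) B.

Lemma mem_itr B x j z : reflect (exists b i, [/\ b \in B, (i <= j)%N & z = b + x *+ i])
  (z \in itr B x j).
Proof.
elim: j z => [|j IH] z /=.
  apply: (iffP idP) => [zB|[b [i [bB]]]]; first by exists z, 0%N; rewrite addr0.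
  by rewrite leqn0 => /eqP -> ->; rewrite addr0.
rewrite inE mem_shift; apply: (iffP orP) => [[/IH [b [i [bB ij ->]]]|/IH [b [i [bB ij h]]]]|].
- by exists b, i; split => //; apply: leq_trans ij _.
- by exists b, i.+1; split => //; rewrite mulrSr addrA -h subrK.
move=> [b [i [bB ij ->]]]; case: (leqP i j) => hij.
  by left; apply/IH; exists b, i.
have -> : i = j.+1 by apply/eqP; rewrite eqn_leq ij.
by right; apply/IH; exists b, j; split => //; rewrite mulrSr addrA addrK.
Qed.

Lemma itr_mono B x i j : (i <= j)%N -> itr B x i \subset itr B x j.
Proof.
move=> ij; apply/subsetP => z /mem_itr [b [l [bB li ->]]]; apply/mem_itr.
by exists b, l; split => //; apply: leq_trans ij.
Qed.

Lemma itr_grow B x j : x != 0 -> B != set0 -> itr B x j.+1 != setT ->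
  (#|itr B x j| < #|itr B x j.+1|)%N.
Proof.
move=> nx nB nT; apply: proper_card; rewrite properEneq itr_mono // andbT.
apply: contra nT => /eqP e.
have sub : shift (itr B x j) x \subset itr B x j.
  by apply/subsetP => z zs; rewrite e; apply/setUP; right; exact: zs.
rewrite -e (orbit_full nx sub) //.
have /set0Pn [b bB] := nB; apply/set0Pn; exists b.
exact: (subsetP (itr_mono B x (leq0n j))).
Qed.

Lemma itr_card B x j : x != 0 -> B != set0 -> itr B x j != setT ->
  (#|B| + j <= #|itr B x j|)%N.
Proof.
move=> nx nB; elim: j => [|j IH] nT; first by rewrite addn0.
rewrite addnS; apply: (leq_ltn_trans _ (itr_grow nx nB nT)); apply: IH.
apply: contra nT => /eqP e; rewrite eqEsubset subsetT /=.
by apply: subset_trans (itr_mono B x (leqnSn j)); rewrite e.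
Qed.


Lemma L2 A B a x k : A = [set a + x *+ (nat_of_ord i) | i : 'I_k] ->
  (2 <= #|A|)%N -> B != set0 -> (#|sumset A B| <= #|A| + #|B| - 1)%N ->
  (#|sumset A B| < p)%N -> progression (sumset A B).
Proof.
move=> eA A2 nB hle hlt.
have nx : x != 0.
  apply/eqP => x0; have : A \subset [set a].
    by rewrite eA; apply/subsetP => z /imsetP [i _ ->]; rewrite x0 mul0rn addr0 set11.
  by move/subset_leq_card; rewrite cards1 => h; have := leq_trans A2 h.
have kA : (#|A| <= k)%N by rewrite eA; apply: leq_trans (leq_imset_card _ _) _; rewrite card_ord.
case: k eA kA => [|[|k]] eA kA; try by move: (leq_trans A2 kA).
have eS : sumset A B = shift (itr B x k.+1) a.
  apply/setP => z; rewrite mem_shift; apply/sumsetP/mem_itr.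
    move=> [y [b [/[dup] yA]]]; rewrite eA => /imsetP [i _ ->] bB ->.
    exists b, i; split => //; first by rewrite -ltnS.
    by ring.
  move=> [b [i [bB ik e]]]; exists (a + x *+ i), b; split => //.
    by rewrite eA; apply/imsetP; exists (Ordinal (ik : (i < k.+2)%N)).
  by rewrite -(subrK a z) e; ring.
rewrite eS; apply: prog_shift.
have nT : itr B x k.+1 != setT by apply: card_ltp_neq; rewrite -(card_shift _ a) -eS.
have nT' : itr B x k != setT.
  apply: contra nT => /eqP e; rewrite eqEsubset subsetT /=.
  by apply: subset_trans (itr_mono B x (leqnSn k)); rewrite e.
have c1 := itr_card nx nB nT'.
have c2 : (#|itr B x k.+1| <= #|B| + k.+1)%N.
  rewrite -(card_shift _ a) -eS; apply: leq_trans hle _.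
  exact: ar_a kA.
apply: L1 => //.
- apply/set0Pn; have /set0Pn [b bB] := nB; exists b.
  exact: (subsetP (itr_mono B x (leq0n k))).
- by apply: leq_trans c2 _; rewrite addnS ltnS.
Qed.


Lemma shiftI X Y u : shift (X :&: Y) u = shift X u :&: shift Y u.
Proof. by apply/setP => z; rewrite !inE !mem_shift inE. Qed.

Lemma shiftS X u v : shift (shift X u) v = shift X (u + v).
Proof. by apply/setP => z; rewrite !mem_shift addrAC -addrA -opprD. Qed.

Lemma shift0 X : shift X 0 = X.
Proof. by apply/setP => z; rewrite mem_shift subr0. Qed.

Lemma sub_shift A B e : (B \subset shift A (- e)) = (shift B e \subset A).
Proof.
apply/subsetP/subsetP => h z.
  by rewrite mem_shift => /h; rewrite mem_shift opprK subrK.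
by move=> zB; rewrite mem_shift opprK; apply: h; rewrite mem_shift addrK.
Qed.

Lemma setI_full B X : (#|B| <= #|B :&: X|)%N -> B \subset X.
Proof.
move=> h; have : B :&: X == B by rewrite eqEcard subsetIl h.
by move/eqP <-; apply: subsetIr.
Qed.

Lemma two_elems B : (1 < #|B|)%N -> exists b0 b1, [/\ b0 \in B, b1 \in B & b0 != b1].
Proof.
move=> B2; have [c1 c1B] : exists c1, c1 \in B.
  by apply/set0Pn; rewrite -card_gt0; apply: ltn_trans B2.
have : (0 < #|B :\ c1|)%N by move: B2; rewrite (cardsD1 c1) c1B.
rewrite card_gt0 => /set0Pn [c2]; rewrite !inE => /andP [n21 c2B].
by exists c1, c2; split => //; rewrite eq_sym.
Qed.

Lemma three_elems B : (2 < #|B|)%N ->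
  exists b0 b1 b2, [/\ b0 \in B, b1 \in B, b2 \in B & [/\ b0 != b1, b0 != b2 & b1 != b2]].
Proof.
move=> B3; have [c1 c1B] : exists c1, c1 \in B.
  by apply/set0Pn; rewrite -card_gt0; apply: ltn_trans B3.
have : (1 < #|B :\ c1|)%N by move: B3; rewrite (cardsD1 c1) c1B.
move/two_elems => [b1 [b2 []]]; rewrite !inE => /andP [n1 b1B] /andP [n2 b2B] n12.
by exists c1, b1, b2; split => //; split => //; rewrite eq_sym.
Qed.

Lemma card2_eq B b0 b1 : #|B| = 2%N -> b0 \in B -> b1 \in B -> b0 != b1 ->
  B = [set b0; b1].
Proof.
move=> c2 b0B b1B n01; apply/eqP; rewrite eq_sym eqEcard c2 cards2 n01 andbT.
by apply/subsetP => z /set2P [->|->].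
Qed.


Lemma stuck_K A B :
  (2 <= #|B|)%N -> (#|B| <= #|A|)%N -> (#|sumset A B| <= #|A| + #|B| - 1)%N ->
  (#|sumset A B| < p)%N ->
  (forall e, (2 <= #|B :&: shift A (- e)|)%N -> shift B e \subset A) ->
  sumset B [set e | shift B e \subset A] = A /\
  (#|[set e | shift B e \subset A]| + #|B| = #|A| + 1)%N.
Proof.
move=> B2 BA hle hlt H; set K := [set e | shift B e \subset A].
have [b0 [b1 [b0B b1B n01]]] := two_elems B2.
set t := b1 - b0.
have sub1 : shift (A :|: shift A t) b0 \subset sumset A B.
  apply/subsetP => z; rewrite mem_shift inE mem_shift => /orP [h|h].
    by rewrite -(subrK b0 z); apply: mem_sumset.
  rewrite (_ : z = (z - b0 - t) + b1); first exact: mem_sumset.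
  by rewrite /t; ring.
have cI : (#|A| + 1 <= #|A :&: shift A t| + #|B|)%N.
  have := cardsUI A (shift A t); rewrite card_shift.
  have := subset_leq_card sub1; rewrite card_shift => h1 h2.
  exact: ar_b h2 (leq_trans h1 hle) B2.
have subK : shift (A :&: shift A t) (- b1) \subset K.
  apply/subsetP => e; rewrite mem_shift opprK inE mem_shift => /andP [h1 h2]; rewrite inE.
  apply: H; apply: (@leq_trans #|[set b0; b1]|); first by rewrite cards2 n01.
  apply: subset_leq_card.
  apply/subsetP => z /set2P [->|->]; rewrite inE mem_shift opprK ?b0B ?b1B /=.
    by rewrite (_ : b0 + e = e + b1 - t) // /t; ring.
  by rewrite addrC.
have cK : (#|A :&: shift A t| <= #|K|)%N.
  by rewrite -(card_shift _ (- b1)); apply: subset_leq_card.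
have sBK : sumset B K \subset A.
  apply/subsetP => z /sumsetP [b [e [bB]]]; rewrite inE => /subsetP h ->.
  by apply: h; rewrite mem_shift addrK.
have nK : K != set0 by rewrite -card_gt0; exact: ar_c cI cK BA.
have nB : B != set0 by rewrite -card_gt0; apply: ltn_trans B2.
have lA : (#|A| <= #|sumset A B|)%N := card_sumset_shift A b0B.
have cd := CD' nB nK (leq_ltn_trans (subset_leq_card sBK) (leq_ltn_trans lA hlt)).
have c2 := subset_leq_card sBK.
split; last exact: ar_d cI cK cd c2 B2.
by apply/eqP; rewrite eqEcard sBK /=; apply: ar_e cI cK cd B2.
Qed.


Lemma card_shiftI X u v : #|shift X u :&: shift X v| = #|X :&: shift X (v - u)|.
Proof.
rewrite -(card_shift (X :&: shift X (v - u)) u).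
suff -> : shift X u :&: shift X v = shift (X :&: shift X (v - u)) u by [].
apply/setP => z; rewrite !inE !mem_shift inE mem_shift.
by rewrite (_ : z - u - (v - u) = z - v) //; ring.
Qed.

Lemma card_shiftI2 B e w : #|shift B e :&: shift (shift B e) w| = #|B :&: shift B w|.
Proof. by rewrite shiftS card_shiftI (_ : e + w - e = w) //; ring. Qed.

Lemma vosper_aux n : forall B, (#|B| <= n)%N -> forall m A, (#|A| <= m)%N ->
  (2 <= #|A|)%N -> (2 <= #|B|)%N -> (#|sumset A B| <= #|A| + #|B| - 1)%N ->
  (#|sumset A B| + 2 <= p)%N -> progression (sumset A B).
Proof.
elim: n => [|n IHn] B hB; first by move=> m A _ _ B2; move: (leq_trans B2 hB).
elim => [|m IHm] A hA A2 B2 hle hp; first by move: (leq_trans A2 hA).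
have hlt : (#|sumset A B| < p)%N by apply: leq_trans hp; rewrite addn2.
have [AB|BA] := ltnP #|A| #|B|.
  rewrite sumsetC; apply: (IHn A _ #|B|) => //; first by rewrite -ltnS; apply: leq_trans hB.
  - by rewrite sumsetC addnC.
  - by rewrite sumsetC.
have [b0 b0B] : exists b0, b0 \in B by apply/set0Pn; rewrite -card_gt0; apply: ltn_trans B2.
have nB : B != set0 by apply/set0Pn; exists b0.
have lA : (#|A| <= #|sumset A B|)%N := card_sumset_shift A b0B.
case: (boolP [exists e, (2 <= #|B :&: shift A (- e)|)%N && (#|B :&: shift A (- e)| < #|B|)%N]).
  move/existsP => [e /andP [r2 rB]].
  have nA' : A :|: shift B e != set0.
    by apply/set0Pn; exists (b0 + e); rewrite inE mem_shift addrK b0B orbT.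
  have nB' : B :&: shift A (- e) != set0 by rewrite -card_gt0; apply: ltn_trans r2.
  have sub := etrans_sub A B e.
  have cd := CD' nA' nB' (leq_ltn_trans (subset_leq_card sub) hlt).
  have ec := etrans_card A B e.
  have eS : sumset (A :|: shift B e) (B :&: shift A (- e)) = sumset A B.
    apply/eqP; rewrite eqEcard sub /=; apply: leq_trans hle _.
    by rewrite -ec.
  rewrite -eS; apply: (IHn _ _ #|A :|: shift B e|) => //.
  - by rewrite -ltnS; apply: leq_trans rB hB.
  - by apply: leq_trans A2 _; apply: subset_leq_card; apply: subsetUl.
  - by rewrite eS ec.
  - by rewrite eS.
move/existsPn => H.
have H' : forall e, (2 <= #|B :&: shift A (- e)|)%N -> shift B e \subset A.
  move=> e r2; have := H e; rewrite r2 /= -leqNgt => rB.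
  by rewrite -sub_shift; apply: setI_full.
have [eK cK] := stuck_K B2 BA hle hlt H'.
move: eK cK; set K := [set e | shift B e \subset A] => eK cK.
have [K2|K1] := ltnP 1 #|K|.
  have pK : progression A.
    rewrite -eK sumsetC; apply: (IHm K) => //.
    - rewrite -ltnS; apply: leq_trans hA; exact: ar_f cK B2.
    - rewrite sumsetC eK; exact: ar_g cK.
    - by rewrite sumsetC eK; apply: leq_trans hp; rewrite leq_add2r.
  move: pK => [q [x [k eA]]]; exact: L2 eA A2 nB hle hlt.
have cK1 : #|K| = 1%N.
  by apply/eqP; rewrite eqn_leq K1 /=; exact: ar_h cK BA.
have eAB : #|A| = #|B|.
  exact: ar_i cK cK1.
have [e0 eK0] : exists e0, K = [set e0] by apply/cards1P; apply/eqP.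
have eA : A = shift B e0 by rewrite -eK eK0 sumset1.
have small : forall t, t != 0 -> (#|B :&: shift B t| <= 1)%N.
  move=> t nt; rewrite leqNgt; apply/negP => h.
  have : e0 - t \in K.
    rewrite inE; apply: H'.
    rewrite (_ : shift A (- (e0 - t)) = shift B t) //.
    by rewrite eA shiftS (_ : e0 + - (e0 - t) = t) //; ring.
  rewrite eK0 inE -subr_eq0 (_ : e0 - t - e0 = - t); last by ring.
  by rewrite oppr_eq0 (negbTE nt).
have sh z b : b \in B -> z \in shift A b -> z \in sumset A B.
  by move=> bB; rewrite mem_shift => h; rewrite -(subrK b z); apply: mem_sumset.
have [B3|B3] := ltnP 2 #|B|.
  have [c0 [c1 [c2 [c0B c1B c2B [n01 n02 n12]]]]] := three_elems B3.
  have sU : shift A c0 :|: shift A c1 \subset sumset A B.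
    by apply/subsetP => z /setUP [] h; [apply: (sh z c0) | apply: (sh z c1)].
  have cI u v : u != v -> (#|shift A u :&: shift A v| <= 1)%N.
    move=> nuv; rewrite card_shiftI eA card_shiftI2; apply: small.
    by rewrite subr_eq0 eq_sym.
  have eU : shift A c0 :|: shift A c1 = sumset A B.
    apply/eqP; rewrite eqEcard sU /=; apply: leq_trans hle _.
    have := cardsUI (shift A c0) (shift A c1); rewrite !card_shift.
    move=> h2; exact: ar_j h2 (cI _ _ n01) eAB.
  have s2 : shift A c2 \subset (shift A c2 :&: shift A c0) :|: (shift A c2 :&: shift A c1).
    apply/subsetP => z zs; have := sh z c2 c2B zs; rewrite -eU.
    by rewrite !inE zs /= => /orP [] ->; rewrite ?orbT.
  have := leq_trans (subset_leq_card s2) (leq_card_setU _ _).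
  rewrite card_shift eAB => h.
  have n20 : c2 != c0 by rewrite eq_sym.
  have n21 : c2 != c1 by rewrite eq_sym.
  by case: (ar_k h (cI _ _ n20) (cI _ _ n21) B3).
have cB2 : #|B| = 2%N by apply/eqP; rewrite eqn_leq B3 B2.
have [c0 [c1 [c0B c1B n01]]] := two_elems B2.
have eB := card2_eq cB2 c0B c1B n01.
have nA : A != set0 by rewrite -card_gt0 eAB cB2.
have cd := CD' nA nB hlt.
rewrite /progression; exists (c0 + c0 + e0), (c1 - c0), 3.
apply/eqP; rewrite eqEcard; apply/andP; split; last first.
  apply: leq_trans (leq_imset_card _ _) _; rewrite card_ord.
  by apply: leq_trans cd; rewrite eAB cB2.
apply/subsetP => z /sumsetP [a [b [aA bB ->]]].
move: aA; rewrite eA mem_shift eB => /set2P ha; move: bB; rewrite eB => /set2P hb.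
rewrite -(subrK e0 a).
case: ha => ->; case: hb => ->.
- by apply/imsetP; exists (Ordinal (isT : (0 < 3)%N)) => //=; rewrite mulr0n; ring.
- by apply/imsetP; exists (Ordinal (isT : (1 < 3)%N)) => //=; rewrite mulr1n; ring.
- by apply/imsetP; exists (Ordinal (isT : (1 < 3)%N)) => //=; rewrite mulr1n; ring.
- by apply/imsetP; exists (Ordinal (isT : (2 < 3)%N)) => //=; rewrite mulr2n; ring.
Qed.

Lemma vosper A B : (2 <= #|A|)%N -> (2 <= #|B|)%N ->
  (#|sumset A B| <= #|A| + #|B| - 1)%N -> (#|sumset A B| + 2 <= p)%N ->
  progression (sumset A B).
Proof. exact: (vosper_aux (leqnn #|B|) (leqnn #|A|)). Qed.

End Basics.


Local Close Scope ring_scope.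

Section Hall.
Variables (T : finType) (R : rel T).

Implicit Types (Y S A : {set T}).

Definition nbh (Y S : {set T}) := [set c in Y | [exists a in S, R a c]].

Lemma nbhS Y S S' : S' \subset S -> nbh (nbh Y S) S' = nbh Y S'.
Proof.
move=> /subsetP sS; apply/setP => c; rewrite !inE.
apply/idP/idP => [/andP [/andP [cY _] h]|/andP [cY h]]; first by rewrite cY h.
rewrite cY h andbT /=; move/existsP: h => [a /andP [aS' r]].
by apply/existsP; exists a; rewrite sS.
Qed.

Lemma nbhU Y S S' : nbh Y (S :|: S') = nbh Y S :|: nbh Y S'.
Proof.
apply/setP => c; rewrite !inE -andb_orr; congr (_ && _).
apply/existsP/orP => [[a /andP [/setUP [] h r]]|[] /existsP [a /andP [h r]]].
- by left; apply/existsP; exists a; rewrite h.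
- by right; apply/existsP; exists a; rewrite h.
- by exists a; rewrite inE h.
- by exists a; rewrite inE h orbT.
Qed.

Lemma hall_aux n : forall A Y : {set T}, #|A| <= n ->
  (forall S, S \subset A -> #|S| <= #|nbh Y S|) ->
  exists f : T -> T, [/\ {in A &, injective f}, forall a, a \in A -> f a \in Y &
     forall a, a \in A -> R a (f a)].
Proof.
elim: n => [|n IH] A Y hA hH.
  have -> : A = set0 by apply/eqP; rewrite -cards_eq0 -leqn0.
  by exists id; split => // a; rewrite inE.
case: (boolP [exists S : {set T}, [&& S \proper A, S != set0 & #|nbh Y S| <= #|S|]]).
  move=> /existsP [S /and3P [pS nS tS]].
  have sSA := proper_sub pS.
  have [f1 [i1 y1 r1]] : exists f : T -> T, [/\ {in S &, injective f},
      forall a, a \in S -> f a \in nbh Y S & forall a, a \in S -> R a (f a)].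
    apply: (IH S (nbh Y S)).
      by rewrite -ltnS; apply: leq_trans hA; apply: proper_card.
    move=> S' sS'; rewrite nbhS //; apply: hH; exact: subset_trans sS' sSA.
  have [f2 [i2 y2 r2]] : exists f : T -> T, [/\ {in A :\: S &, injective f},
      forall a, a \in A :\: S -> f a \in Y :\: nbh Y S & forall a, a \in A :\: S -> R a (f a)].
    apply: (IH (A :\: S) (Y :\: nbh Y S)).
      rewrite -ltnS; apply: leq_trans hA; apply: proper_card; rewrite properEneq subsetDl andbT.
      apply: contra nS => /eqP e; apply/eqP/setP => x; rewrite inE; apply/negP => xS.
      have := subsetP sSA x xS; rewrite -e inE xS //.
    move=> S' sS'.
    have eN : nbh (Y :\: nbh Y S) S' = nbh Y S' :\: nbh Y S.
      by apply/setP => c; rewrite !inE andbA.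
    have dis : [disjoint S & S'].
      rewrite -setI_eq0; apply/eqP/setP => x; rewrite !inE.
      by apply/negP => /andP [xS /(subsetP sS')]; rewrite inE xS.
    have sU : S :|: S' \subset A by rewrite subUset sSA (subset_trans sS' (subsetDl _ _)).
    have h1 := hH (S :|: S') sU.
    rewrite nbhU in h1; rewrite eN.
    have := cardsUI (nbh Y S) (nbh Y S'); have := cardsID (nbh Y S) (nbh Y S').
    rewrite (cardsU S S') (_ : #|S :&: S'| = 0) in h1; last by apply/eqP; rewrite cards_eq0 setI_eq0 dis.
    rewrite setIC => h2 h3; exact: ar_l tS h1 h2 h3.
  exists (fun a => if a \in S then f1 a else f2 a); split.
  - move=> a b aA bA; case: ifP => aS; case: ifP => bS.
    + by apply: i1.
    + move=> e; have := y1 a aS; rewrite e => h.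
      have hb : b \in A :\: S by rewrite inE bS bA.
      by have := y2 b hb; rewrite in_setD h.
    + move=> e; have := y1 b bS; rewrite -e => h.
      have ha : a \in A :\: S by rewrite inE aS aA.
      by have := y2 a ha; rewrite in_setD h.
    + by apply: i2; rewrite inE ?aS ?bS ?aA ?bA.
  - move=> a aA; case: ifP => aS.
      by have := y1 a aS; rewrite inE => /andP [].
    have ha : a \in A :\: S by rewrite inE aS aA.
    by have := y2 a ha; rewrite in_setD => /andP [].
  - move=> a aA; case: ifP => aS; first exact: r1.
    by apply: r2; rewrite inE aS aA.
move/existsPn => Hs.
case: (set_0Vmem A) => [->|[a0 a0A]].
  by exists id; split => // a; rewrite inE.
have : 0 < #|nbh Y [set a0]|.
  by apply: leq_trans (hH [set a0] _); rewrite ?cards1 // sub1set.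
rewrite card_gt0 => /set0Pn [c0]; rewrite inE => /andP [c0Y /existsP [a' /andP [/set1P -> r0]]].
have [f' [i' y' r']] : exists f : T -> T, [/\ {in A :\ a0 &, injective f},
    forall a, a \in A :\ a0 -> f a \in Y :\ c0 & forall a, a \in A :\ a0 -> R a (f a)].
  apply: (IH (A :\ a0) (Y :\ c0)).
    by move: hA; rewrite (cardsD1 a0) a0A.
  move=> S sS; case: (set_0Vmem S) => [->|[x xS]]; first by rewrite cards0.
  have := Hs S; rewrite negb_and negb_and negbK -ltnNge.
  have pS : S \proper A.
    rewrite properEneq (subset_trans sS (subsetDl _ _)) andbT.
    by apply/eqP => e; have := subsetP sS a0; rewrite e a0A !inE eqxx => /(_ isT).
  rewrite pS /=; case: eqP => [e|_ /= lt]; first by rewrite e inE in xS.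
  have eN : nbh (Y :\ c0) S = nbh Y S :\ c0.
    by apply/setP => c; rewrite !inE andbA.
  rewrite eN; exact: ar_m lt (cardsD1 c0 (nbh Y S)) (leq_b1 _).
exists (fun a => if a == a0 then c0 else f' a); split.
- move=> a b aA bA; case: eqP => ea; case: eqP => eb.
  + by rewrite ea eb.
  + move=> e; have hb : b \in A :\ a0 by rewrite !inE bA andbT; apply/eqP.
    by have := y' b hb; rewrite -e !inE eqxx.
  + move=> e; have ha : a \in A :\ a0 by rewrite !inE aA andbT; apply/eqP.
    by have := y' a ha; rewrite e !inE eqxx.
  + by apply: i'; rewrite !inE ?aA ?bA andbT; apply/eqP.
- move=> a aA; case: eqP => // ea.
  have ha : a \in A :\ a0 by rewrite !inE aA andbT; apply/eqP.
  by have := y' a ha; rewrite inE => /andP [].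
- move=> a aA; case: eqP => [->|ea] //.
  by apply: r'; rewrite !inE aA andbT; apply/eqP.
Qed.

End Hall.



Lemma sp_swap (T : finType) (E : {set T}) (B : {set {set T}}) n (C : {set T}) u v :
  is_matroid E B -> has_rank B n -> sparse_paving E B n ->
  C \subset E -> #|C| = n -> u \in C -> v \in E -> v \notin C -> C \notin B ->
  v |: (C :\ u) \in B.
Proof.
move=> [_ sBE exch] rk [pav dpav] CE cC uC vE vC nCB.
set I := C :\ u.
apply/negPn/negP => nC'.
set D := v |: C.
have cD : #|D| = n.+1 by rewrite cardsU1 vC cC.
have DE : D \subset E by rewrite subUset sub1set vE CE.
have cI : #|I| = n.-1 by rewrite /I (cardsD1 u C) uC in cC; rewrite -cC.
have IE : I \subset E by apply: subset_trans CE; apply: subsetDl.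
have [Y YB YD] : exists2 Y, Y \in B & Y \subset D.
  have cZ : #|E :\: D| = (#|E| - n).-1.
    rewrite cardsD (setIidPr DE) cD.
    by rewrite subnS.
  have := dpav (E :\: D) (subsetDl _ _) cZ.
  move=> /existsP [Y0 /andP [/imsetP [Y YB ->] sub]].
  exists Y => //; apply/subsetP => y yY; apply/negPn/negP => yD.
  have yE : y \in E := subsetP (sBE Y YB) y yY.
  have := subsetP sub y; rewrite !in_setD yD yE yY => /(_ isT).
  by [].
have [B1 B1B IB1] : exists2 B1, B1 \in B & I \subset B1.
  by have /existsP [B1 /andP [h1 h2]] := pav I IE cI; exists B1.
have [w wB1 wI] : exists2 w, w \in B1 & w \notin I.
  apply/subsetPn; apply/negP => s.
  have n0 : (0 < n)%N by rewrite -cC card_gt0; apply/set0Pn; exists u.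
  by have := subset_leq_card s; rewrite (rk _ B1B) cI; move: n0; case: (n) => //= k _; rewrite ltnn.
have eB1 : B1 = w |: I.
  apply/eqP; rewrite eq_sym eqEcard subUset sub1set wB1 IB1 /=.
  by rewrite (rk _ B1B) cardsU1 wI cI -cC (cardsD1 u C) uC.
have wu : w != u by apply: contraNneq nCB => e; rewrite -(setD1K uC) -/I -e -eB1.
have wv : w != v by apply: contraNneq nC' => e; rewrite -e -eB1.
have wY : w \notin Y.
  apply/negP => wY'; have := subsetP YD w wY'; rewrite /D !inE (negbTE wv) /= => wC.
  by move: wI; rewrite /I !inE wu wC.
have wBY : w \in B1 :\: Y by rewrite inE wB1 wY.
have [y /setDP [yY yB1] hB] := exch B1 Y B1B YB w wBY.
have eI : B1 :\ w = I by rewrite eB1 setU1K.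
rewrite eI in hB.
have := subsetP YD y yY; rewrite /D !inE => /orP [/eqP ey|yC].
  by move: nC'; rewrite -ey hB.
have ey : y = u.
  apply/eqP; apply: contraNT yB1 => nyu; rewrite eB1 !inE nyu yC orbT.
  by [].
by move: nCB; rewrite -(setD1K uC) -/I -ey hB.
Qed.


Local Open Scope ring_scope.

Section Main.
Variable p : nat.
Hypothesis Hp : prime p.
Local Notation G := 'Z_p.

Lemma key (EM EN S : {set G}) : S \subset EM -> S != set0 -> (#|EM| < p)%N -> 0 \notin EN ->
  let X := [set c | [forall a in S, a + c \in EM]] in
  [/\ (#|EN| + 1 <= #|nbh (fun a c : G => (a + c)%R \notin EM) EN S| + #|X|)%N,
      (#|S| + #|X| - 1 <= #|EM|)%N, (1 <= #|X|)%N & sumset S X \subset EM].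
Proof.
move=> SE nS hEM n0 X.
have X0 : 0 \in X.
  by rewrite inE; apply/forallP => a; apply/implyP => aS; rewrite addr0 (subsetP SE).
have sX : sumset S X \subset EM.
  apply/subsetP => z /sumsetP [a [c [aS cX ->]]].
  by move: cX; rewrite inE => /forallP /(_ a) /implyP; apply.
have nX : X != set0 by apply/set0Pn; exists 0.
have cd := CD' Hp nS nX (leq_ltn_trans (subset_leq_card sX) hEM).
have eN : nbh (fun a c : G => (a + c)%R \notin EM) EN S = EN :\: X.
  by apply/setP => c; rewrite !inE negb_forall_in andbC.
have cX : #|X| = (#|X :\ (0%R:G)| + 1)%N by rewrite (cardsD1 (0%R:G) X) X0 addnC.
have sI : EN :&: X \subset X :\ 0.
  apply/subsetP => c; rewrite !inE => /andP [cE ->]; rewrite andbT.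
  by apply: contraNneq n0 => <-.
split => //.
- have c1 : (#|EN :&: X| <= #|X| - 1)%N by rewrite cX addnK; apply: subset_leq_card.
  have c2 : (1 <= #|X|)%N by rewrite cX addn1.
  rewrite eN; exact: ar_t (cardsID X EN) c1 c2.
- exact: leq_trans cd (subset_leq_card sX).
- by rewrite card_gt0.
Qed.


Lemma prog_pm1 (Y : {set G}) : #|Y| = p.-1 -> progression Y.
Proof.
move=> cY.
have p1 := prime_gt1 Hp.
have nT : Y != setT by apply: (card_ltp_neq Hp); rewrite cY ltn_predL ltnW.
have [g _ gY] : exists2 g, g \in setT & g \notin Y by apply/subsetPn; rewrite subTset.
rewrite /progression; exists (g + 1), 1, p.-1.
apply/eqP; rewrite eqEcard; apply/andP; split; last first.
  by apply: leq_trans (leq_imset_card _ _) _; rewrite card_ord cY.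
apply/subsetP => y yY.
have [k kp hk] := mulrn_surj Hp (y - (g + 1)) (oner_neq0 G).
have kp1 : (k < p.-1)%N.
  apply: ar_u kp _ => ek.
  have : (1 : G) *+ k.+1 = 0.
    rewrite ek prednK; last exact: ltnW.
    exact: pchar_Zp.
  rewrite mulrSr hk.
  move/eqP; rewrite (_ : y - (g + 1) + 1 = y - g); last by ring.
  by rewrite subr_eq0 => /eqP eyg; rewrite -eyg yY in gY.
apply/imsetP; exists (Ordinal kp1) => //=.
by rewrite hk; ring.
Qed.

End Main.

Theorem corollary2p5 (p : nat) (Hp : prime p)
    (EM : {set 'Z_p}) (BM : {set {set 'Z_p}})
    (EN : {set 'Z_p}) (BN : {set {set 'Z_p}}) (n : nat) :
  is_matroid EM BM -> loopless EM BM -> has_rank BM n ->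
  is_matroid EN BN -> loopless EN BN -> has_rank BN n ->
  sparse_paving EN BN n ->
  ((~ progression EM /\ (#|EM|.+1 = #|EN|)%N) \/
   (~ progression EM /\ ~ semi_progression EM /\ #|EM| = #|EN|)) ->
  0 \notin EN ->
  matched EM BM EN BN.
Proof.
move=> [BMn sBM exM] _ rkM matN loopN rkN spN hcase n0 A AB.
have [BNn sBN exN] := matN.
have AE := sBM A AB.
have cA := rkM A AB.
have npEM : ~ progression EM by case: hcase => [[]|[]].
have hEMN : (#|EM| <= #|EN|)%N by case: hcase => [[_ <-]|[_ [_ ->]]].
have hEN : (#|EN| < p)%N.
  apply: (card_ltp Hp); apply/eqP => e; move: n0; rewrite e inE.
  by [].
have hEM : (#|EM| < p)%N := leq_ltn_trans hEMN hEN.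
set R := fun a c : 'Z_p => a + c \notin EM.
have hall : forall S : {set 'Z_p}, S \subset A -> (#|S| <= #|nbh R EN S|)%N.
  move=> S SA; case: (set_0Vmem S) => [->|[s sS]]; first by rewrite cards0.
  have nS : S != set0 by apply/set0Pn; exists s.
  have [h1 h2 h3 _] := key Hp (subset_trans SA AE) nS hEM n0.
  exact: ar_p h1 h2 hEMN h3.
have [f [fi fY fR]] := hall_aux (leqnn #|A|) hall.
set C := f @: A.
have cC : #|C| = n by rewrite card_in_imset.
have CE : C \subset EN by apply/subsetP => c /imsetP [a aA ->]; apply: fY.
case: (boolP (C \in BN)) => CB.
  by exists C => //; exists f; split.
have fC a : a \in A -> f a \in C by move=> aA; apply: imset_f.
case: (boolP [exists a0 in A, exists y in EN :\: C, R a0 y]).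
  move=> /existsP [a0 /andP [a0A /existsP [y /andP [yEC ry]]]].
  move: yEC; rewrite in_setD => /andP [yC yEN].
  have C'B := sp_swap matN rkN spN CE cC (fC a0 a0A) yEN yC CB.
  exists (y |: (C :\ f a0)) => //.
  exists (fun a => if a == a0 then y else f a); split.
  - move=> a b aA bA /=; case: eqP => ea; case: eqP => eb.
    + by rewrite ea eb.
    + by move=> e; move: yC; rewrite e fC.
    + by move=> e; move: yC; rewrite -e fC.
    + by apply: fi.
  - apply/setP => z; apply/imsetP/setU1P.
      move=> [a aA ->]; case: eqP => ea; first by left.
      right; rewrite !inE fC // andbT; apply/eqP => e.
      by apply: ea; apply: fi.
    move=> [->|]; first by exists a0; rewrite ?eqxx.
    rewrite !inE => /andP [nz /imsetP [a aA ez]].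
    exists a => //; case: eqP => ea; last by [].
    by move: nz; rewrite ez ea eqxx.
  - move=> a aA; case: eqP => [->|_]; first exact: ry.
    exact: fR.
move/existsPn => Hno; exfalso.
have sNC : nbh R EN A \subset C.
  apply/subsetP => c; rewrite inE => /andP [cE /existsP [a /andP [aA r]]].
  apply/negPn/negP => cC'.
  have := Hno a; rewrite aA /= => /existsP; apply; exists c.
  by rewrite in_setD cC' cE.
have hN : (#|nbh R EN A| <= n)%N by rewrite -cC; apply: subset_leq_card.
have [Y0 Y0B] : exists Y0, Y0 \in BN by apply/set0Pn.
have [n01|n2] := leqP n 1.
  case: n n01 rkM rkN spN cA cC hN => [|[|//]] _ rkM rkN spN cA cC hN.
    have Y00 : Y0 = set0 by apply/eqP; rewrite -cards_eq0 rkN.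
    have C0 : C = set0 by apply/eqP; rewrite -cards_eq0 cC.
    by move: CB; rewrite C0 -Y00 Y0B.
  have [c eC] : exists c, C = [set c] by apply/cards1P; apply/eqP.
  have cE : c \in EN by apply: (subsetP CE); rewrite eC set11.
  have /existsP [Y /andP [YB sY]] := loopN c cE.
  have eY : [set c] = Y by apply/eqP; rewrite eqEcard sY cards1 rkN.
  by move: CB; rewrite eC eY YB.
have nA : A != set0 by rewrite -card_gt0 cA; apply: ltn_trans n2.
have := key Hp AE nA hEM n0.
set X := [set c | _] => -[h1 h2 h3 sX].
rewrite cA in h2.
have nEM : (n <= #|EM|)%N by rewrite -cA; apply: subset_leq_card.
case: hcase => [[_ e]|[_ [_ e]]].
  by apply: ar_q h1 hN h2 h3; rewrite -e addn1.
have [X1|X2] := leqP #|X| 1.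
  have nE := ar_r (esym e) h1 hN X1 nEM.
  have eC : C = EN by apply/eqP; rewrite eqEcard CE /= -nE; apply: eq_leq; apply/esym; exact: cC.
  have eY : Y0 = EN by apply/eqP; rewrite eqEcard (sBN Y0 Y0B) /= -nE; apply: eq_leq; apply/esym; exact: rkN Y0 Y0B.
  by move: CB; rewrite eC -eY Y0B.
have nX : X != set0 by rewrite -card_gt0; apply: ltn_trans X2.
have cd := CD' Hp nA nX (leq_ltn_trans (subset_leq_card sX) hEM).
have hEMx := ar_n (esym e) h1 hN.
have ES : sumset A X = EM.
  apply/eqP; rewrite eqEcard sX /=; apply: leq_trans hEMx _.
  by rewrite -cA.
apply: npEM.
have [ep|nep] := eqVneq #|EM| p.-1; first exact: (prog_pm1 Hp ep).
rewrite -ES; apply: (vosper Hp).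
- by rewrite cA.
- exact: X2.
- by rewrite ES cA.
- rewrite ES; apply: (ar_o hEM); exact/eqP.
Qed.
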